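(* Let $\mathcal{G}=(\mathcal{V},\mathcal{E})$ be an undirected graph with $n$ nodes and $E$ edges, in which every node has at least one neighbor, with incidence matrix $A\in\mathbb{R}^{n\times E}$. For each node $i$ let $f_i:\mathbb{R}\to\mathbb{R}$ be $M_i$-smooth and $\mu_i$-strongly convex, let $F(\lambda)=\sum_{i=1}^n f_i^*(u_i^TA\lambda)$ for $\lambda\in\mathbb{R}^E$, and let $\lambda^*$ be a minimizer of $F$. Consider the Set-wise Uniform Coordinate Descent (SU-CD) iteration: at each iteration $k$, a node $i$ is sampled uniformly at random from $\{1,\dots,n\}$, then an edge $\ell$ is sampled uniformly at random from $\mathcal{S}_i$, and one sets $\lambda^{k+1}=\lambda^k-\frac{1}{L}\nabla_\ell F(\lambda^k)e_\ell$. Then for every $k$, $$\mathbb{E}[F(\lambda^{k+1})\mid\lambda^k]-F(\lambda^* )\le\left(1-\frac{2\sigma_A}{L\,n\,N_{\max}}\right)\left[F(\lambda^k)-F(\lambda^* )\right].$$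
   Context: The incidence matrix $A$ has, in each column $\ell$ (edge $\ell\equiv(i,j)$), one entry $+1$ and one entry $-1$ in the rows of the endpoints $i,j$ (signs arbitrary), and zeros elsewhere. $u_i\in\mathbb{R}^n$ and $e_\ell\in\mathbb{R}^E$ are standard basis vectors; $f_i^*(y)=\sup_x(yx-f_i(x))$ is the Fenchel conjugate; $\nabla_\ell F(\lambda)=\partial F(\lambda)/\partial\lambda_\ell$. $\mathcal{S}_i$ is the set of edges incident to node $i$, $N_i=|\mathcal{S}_i|$, $N_{\max}=\max_iN_i$. $M_{\max}=\max_iM_i$, $\mu_{\min}=\min_i\mu_i$. Let $\gamma_{\max}$ be the largest eigenvalue and $\gamma^+_{\min}$ the smallest strictly positive eigenvalue of $A^TA$ (equivalently of the graph Laplacian $AA^T$). Then $L=\gamma_{\max}/\mu_{\min}$ (a smoothness constant of $F$) and $\sigma_A=\gamma^+_{\min}/M_{\max}$. The sampling at different iterations is independent. *)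

(* Defs.v *)
From HB Require Import structures.
From mathcomp Require Import all_boot all_order all_algebra.
From mathcomp Require Import all_classical all_reals all_analysis.
Set Implicit Arguments. Unset Strict Implicit. Unset Printing Implicit Defensive.
Import Order.TTheory GRing.Theory Num.Theory.
Local Open Scope ring_scope.
Local Open Scope classical_set_scope.

Section Defs.
Variable R : realType.

Definition incidence (n E : nat) (A : 'M[R]_(n, E)) : Prop :=
  forall l : 'I_E, exists i j : 'I_n,
    [/\ i != j, A i l = 1, A j l = -1 & forall k, k != i -> k != j -> A k l = 0].

Definition Sedges (n E : nat) (A : 'M[R]_(n, E)) (i : 'I_n) : {set 'I_E} :=
  [set l | A i l != 0].
Definition Ndeg (n E : nat) (A : 'M[R]_(n, E)) (i : 'I_n) : nat := #|Sedges A i|.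
Definition Nmax (n E : nat) (A : 'M[R]_(n, E)) : nat := (\max_(i < n) Ndeg A i)%N.

Definition smooth (M : R) (f : R -> R) : Prop :=
  (forall x, derivable f x 1) /\
  (forall x y, `|derive1 f x - derive1 f y| <= M * `|x - y|).

Definition strongly_convex (mu : R) (f : R -> R) : Prop :=
  forall x y t, 0 <= t <= 1 ->
    f (t * x + (1 - t) * y) <= t * f x + (1 - t) * f y - mu / 2 * t * (1 - t) * (x - y) ^+ 2.

Definition fconj (f : R -> R) (y : R) : R := sup (range (fun x => y * x - f x)).

Definition Fdual (n E : nat) (A : 'M[R]_(n, E)) (f : 'I_n -> R -> R)
  (lam : 'cV[R]_E) : R := \sum_(i < n) fconj (f i) ((A *m lam) i ord0).

Definition partial (E : nat) (G : 'cV[R]_E -> R) (lam : 'cV[R]_E) (l : 'I_E) : R :=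
  derive1 (fun t : R => G (lam + t *: delta_mx l ord0)) 0.

(* max / min of a finite family (max uses 0 as neutral, fine for positive
   families; min uses the max as neutral element, hence is the true minimum
   whenever n > 0) *)
Definition maxf (n : nat) (g : 'I_n -> R) : R := \big[Num.max/0]_(i < n) g i.
Definition minf (n : nat) (g : 'I_n -> R) : R := \big[Num.min/maxf g]_(i < n) g i.

(* SU-CD: conditional expectation of F(lambda^{k+1}) given lambda^k = lam:
   i uniform in {1..n}, then l uniform in S_i, step lam - (1/L) nabla_l F(lam) e_l *)
Definition SUCD_expect (n E : nat) (A : 'M[R]_(n, E)) (f : 'I_n -> R -> R)
  (L : R) (lam : 'cV[R]_E) : R :=
  n%:R^-1 * \sum_(i < n) ((Ndeg A i)%:R^-1 *
     \sum_(l in Sedges A i)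
        Fdual A f (lam - (L^-1 * partial (Fdual A f) lam l) *: delta_mx l ord0)).
End Defs.

(* Main.v *)
Require Import Defs.
From HB Require Import structures.
From mathcomp Require Import all_boot all_order all_algebra.
From mathcomp Require Import all_classical all_reals all_analysis.
From mathcomp Require Import complex spectral sesquilinear.
From mathcomp Require Import ring lra.
Import Order.TTheory GRing.Theory Num.Theory.
Import numFieldNormedType.Exports.
Local Open Scope ring_scope.

Section Spec.
Variable R : rcfType.
Local Notation C := R[i].
Local Notation cRe := (@complex.Re R).
Local Notation cIm := (@complex.Im R).
Local Notation toC := (real_complex R).

Lemma cReD (x y : C) : cRe (x + y) = cRe x + cRe y. Proof. by case: x; case: y. Qed.
Lemma cImD (x y : C) : cIm (x + y) = cIm x + cIm y. Proof. by case: x; case: y. Qed.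
Lemma cRe0 : cRe 0 = 0. Proof. by []. Qed.
Lemma cIm0 : cIm 0 = 0. Proof. by []. Qed.
Lemma cReM (x y : C) : cRe (x * y) = cRe x * cRe y - cIm x * cIm y.
Proof. by case: x; case: y. Qed.
Lemma cImM (x y : C) : cIm (x * y) = cRe x * cIm y + cIm x * cRe y.
Proof. by case: x => a b; case: y => c d /=; rewrite addrC. Qed.
Lemma cRe_real (a : R) : cRe (toC a) = a. Proof. by []. Qed.
Lemma cIm_real (a : R) : cIm (toC a) = 0. Proof. by []. Qed.
Lemma cRe_conj (x : C) : cRe (x^*) = cRe x. Proof. by case: x. Qed.
Lemma cIm_conj (x : C) : cIm (x^*) = - cIm x. Proof. by case: x. Qed.
Lemma cRe_sum I (r : seq I) (P : pred I) (F : I -> C) :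
  cRe (\sum_(i <- r | P i) F i) = \sum_(i <- r | P i) cRe (F i).
Proof. exact: (big_morph _ cReD cRe0). Qed.
Lemma cIm_sum I (r : seq I) (P : pred I) (F : I -> C) :
  cIm (\sum_(i <- r | P i) F i) = \sum_(i <- r | P i) cIm (F i).
Proof. exact: (big_morph _ cImD cIm0). Qed.
Lemma cRe_rM (a : R) (x : C) : cRe (toC a * x) = a * cRe x.
Proof. by rewrite cReM cRe_real cIm_real mul0r subr0. Qed.
Lemma cIm_rM (a : R) (x : C) : cIm (toC a * x) = a * cIm x.
Proof. by rewrite cImM cRe_real cIm_real mul0r addr0. Qed.
Lemma cext (x : C) : cRe x = 0 -> cIm x = 0 -> x = 0.
Proof. by case: x => a b /= -> ->. Qed.

Lemma spectral_real m (B : 'M[R]_m) : B^T = B ->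
  exists (U V : 'M[R]_m) (d : 'I_m -> R),
  [/\ forall j, B *m col j U = d j *: col j U,
      forall j, B *m col j V = d j *: col j V,
      forall j, col j U != 0 \/ col j V != 0 &
      forall x y : 'rV[R]_m, (x *m y^T) 0 0 =
         \sum_j ((x *m U) 0 j * (y *m U) 0 j + (x *m V) 0 j * (y *m V) 0 j)].
Proof.
move=> Bsym.
pose BC := map_mx toC B.
have BCh : BC \is hermsymmx.
  apply/(is_hermitianmxP false Num.conj BC). rewrite expr0 scale1r. apply/matrixP => i j.
  have E : B j i = B i j by rewrite -{1}Bsym mxE.
  have cR : forall a b : R, a = b -> toC a = Num.conj (toC b) by move=> a b ->; apply/eqP; rewrite eq_complex /= oppr0 !eqxx.
  rewrite !mxE; exact: cR (esym E).
have /hermitian_normalmx /orthomx_spectralP BCE := BCh.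
have spR := hermitian_spectral_diag_real BCh.
set P := spectralmx BC in BCE; set sp := spectral_diag BC in BCE spR.
have Pu : P \is unitarymx by exact: spectral_unitarymx.
set Q := (P ^t*)%sesqui.
have PQ : P *m Q = 1%:M by apply/unitarymxP.
have QP : Q *m P = 1%:M by rewrite /Q -invmx_unitary // mulVmx // unitarymx_unit.
have BQ : BC *m Q = Q *m diag_mx sp.
  by rewrite BCE invmx_unitary // -!mulmxA PQ mulmx1.
have spI : forall j, cIm (sp 0 j) = 0.
  move=> j; have /mxOverP /(_ 0 j) := spR.
  by case/complex_realP => k ->.
have ReQ : forall (x : 'rV[R]_m) j, cRe ((map_mx toC x *m Q) 0 j) = (x *m map_mx cRe Q) 0 j.
  move=> x j; rewrite !mxE cRe_sum; apply: eq_bigr => k _; by rewrite !mxE cRe_rM.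
have ImQ : forall (x : 'rV[R]_m) j, cIm ((map_mx toC x *m Q) 0 j) = (x *m map_mx cIm Q) 0 j.
  move=> x j; rewrite !mxE cIm_sum; apply: eq_bigr => k _; by rewrite !mxE cIm_rM.
exists (map_mx cRe Q), (map_mx cIm Q), (fun j => cRe (sp 0 j)); split.
- move=> j; apply/matrixP => i k; rewrite ord1 {k}.
  have /matrixP /(_ i j) := BQ; rewrite mul_mx_diag !mxE => /(congr1 cRe).
  rewrite cRe_sum cReM spI mulr0 subr0 => E; rewrite mulrC -E.
  by apply: eq_bigr => k _; rewrite !mxE cRe_rM.
- move=> j; apply/matrixP => i k; rewrite ord1 {k}.
  have /matrixP /(_ i j) := BQ; rewrite mul_mx_diag !mxE => /(congr1 cIm).
  rewrite cIm_sum cImM spI mulr0 add0r => E; rewrite mulrC -E.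
  by apply: eq_bigr => k _; rewrite !mxE cIm_rM.
- move=> j; case: (eqVneq (col j (map_mx cRe Q)) 0) => HU; last by left.
  case: (eqVneq (col j (map_mx cIm Q)) 0) => HV; last by right.
  exfalso.
  have Q0 : forall k, Q k j = 0.
    move=> k; apply: cext.
    - by have /matrixP /(_ k 0) := HU; rewrite !mxE.
    - by have /matrixP /(_ k 0) := HV; rewrite !mxE.
  have : (P *m Q) j j = 1 by rewrite PQ mxE eqxx.
  rewrite mxE big1 => [/eqP|k _]; first by rewrite eq_sym oner_eq0.
  have -> : P j k = (Q k j)^* by rewrite /Q !mxE conjCK.
  by rewrite Q0 mulr0.
move=> x y.
set xC := map_mx toC x; set yC := map_mx toC y.
have E1 : toC ((x *m y^T) 0 0) = (xC *m Q *m (P *m yC^T)) 0 0.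
  have -> : yC^T = map_mx toC (y^T) by apply/matrixP => a b; rewrite !mxE.
  by rewrite mulmxA -(mulmxA xC) QP mulmx1 /xC -map_mxM [in RHS]mxE.
have Rz : forall j, cRe ((P *m yC^T) j 0) = (y *m map_mx cRe Q) 0 j.
  move=> j; rewrite !mxE cRe_sum; apply: eq_bigr => k _; rewrite !mxE mulrC cRe_rM.
  by rewrite cRe_conj.
have Iz : forall j, cIm ((P *m yC^T) j 0) = - (y *m map_mx cIm Q) 0 j.
  move=> j; rewrite !mxE cIm_sum -sumrN; apply: eq_bigr => k _; rewrite !mxE mulrC cIm_rM.
  by rewrite cIm_conj mulrN opprK.
move: (congr1 cRe E1); rewrite cRe_real => ->.
rewrite mxE cRe_sum; apply: eq_bigr => j _.
by rewrite cReM Rz Iz ReQ ImQ mulrN opprK.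
Qed.
End Spec.

Section Bounds.
Variable R : rcfType.

Lemma rdot_sum m (x y : 'rV[R]_m) : (x *m y^T) 0 0 = \sum_k x 0 k * y 0 k.
Proof. by rewrite mxE; apply: eq_bigr => k _; rewrite mxE. Qed.

Lemma rnorm_ge0 m (x : 'rV[R]_m) : 0 <= (x *m x^T) 0 0.
Proof. by rewrite rdot_sum sumr_ge0 // => k _; rewrite -expr2 sqr_ge0. Qed.

Lemma rnorm_eq0 m (x : 'rV[R]_m) : (x *m x^T) 0 0 = 0 -> x = 0.
Proof.
rewrite rdot_sum => /eqP; rewrite psumr_eq0 => [/allP H|k _]; last by rewrite -expr2 sqr_ge0.
apply/rowP => k; rewrite mxE; have := H k (mem_index_enum k).
by rewrite -expr2 sqrf_eq0 => /implyP /(_ isT) /eqP.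
Qed.

Lemma quadA n m (A : 'M[R]_(n, m)) (v : 'rV[R]_m) :
  (v *m (A^T *m A) *m v^T) 0 0 = ((v *m A^T) *m (v *m A^T)^T) 0 0.
Proof. by rewrite trmx_mul trmxK !mulmxA. Qed.


Lemma spec_bounds n m (A : 'M[R]_(n, m)) (gmax gminp : R) :
  (forall a, eigenvalue (A^T *m A) a -> a <= gmax) -> 0 < gminp ->
  (forall a, eigenvalue (A^T *m A) a -> 0 < a -> gminp <= a) ->
  (forall l, \sum_i A i l ^+ 2 <= gmax) /\
  (forall (p : 'cV[R]_n) (dl : 'cV[R]_m) (c : R), 0 < c ->
    - (\sum_l (A^T *m p) l 0 * dl l 0) <=
      (\sum_l (A^T *m p) l 0 ^+ 2) / (2 * c * gminp) + c / 2 * \sum_i ((A *m dl) i 0) ^+ 2).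
Proof.
move=> hmax hg0 hmin.
set B := A^T *m A.
have Bsym : B^T = B by rewrite /B trmx_mul trmxK.
have [U [V [d [hU hV hnz hpar]]]] := @spectral_real R m B Bsym.
have BU : B *m U = U *m diag_mx (\row_j d j).
  apply/matrixP => k j; rewrite mul_mx_diag !mxE.
  have := congr1 (fun X : 'M[R]_(m,1) => X k 0) (hU j); rewrite !mxE mulrC => <-.
  by apply: eq_bigr => i _; rewrite !mxE.
have BV : B *m V = V *m diag_mx (\row_j d j).
  apply/matrixP => k j; rewrite mul_mx_diag !mxE.
  have := congr1 (fun X : 'M[R]_(m,1) => X k 0) (hV j); rewrite !mxE mulrC => <-.
  by apply: eq_bigr => i _; rewrite !mxE.
have hquad : forall x y : 'rV[R]_m, (x *m B *m y^T) 0 0 =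
    \sum_j d j * ((x *m U) 0 j * (y *m U) 0 j + (x *m V) 0 j * (y *m V) 0 j).
  move=> x y.
  have -> : x *m B *m y^T = x *m (y *m B)^T by rewrite -mulmxA trmx_mul Bsym.
  rewrite hpar; apply: eq_bigr => j _.
  rewrite -[y *m B *m U]mulmxA -[y *m B *m V]mulmxA BU BV !mulmxA !mul_mx_diag !mxE; ring.
have eig : forall j (w : 'cV[R]_m), B *m w = d j *: w -> w != 0 ->
    [/\ eigenvalue B (d j), 0 <= d j & (d j = 0 -> A *m w = 0)].
  move=> j w hw wn0.
  have hv : w^T *m B = d j *: w^T by rewrite -Bsym -trmx_mul hw linearZ.
  have q1 : (w^T *m B *m w^T^T) 0 0 = d j * (w^T *m w^T^T) 0 0 by rewrite hv -scalemxAl mxE.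
  have wpos : 0 < (w^T *m w^T^T) 0 0.
    rewrite lt_def rnorm_ge0 andbT; apply/eqP => /rnorm_eq0 /eqP.
    by rewrite trmx_eq0 (negbTE wn0).
  have q2 := @rnorm_ge0 _ (w^T *m A^T); rewrite -quadA -/B q1 in q2.
  split.
  - by apply/eigenvalueP; exists w^T => //; rewrite trmx_eq0.
  - by move: q2; rewrite pmulr_lge0.
  - move=> d0; move: q1; rewrite d0 mul0r quadA => /rnorm_eq0 /eqP.
    by rewrite -trmx_mul trmx_eq0 => /eqP.
have dge0 : forall j, 0 <= d j.
  move=> j; case: (hnz j) => hn.
  - by have [] := eig j _ (hU j) hn.
  - by have [] := eig j _ (hV j) hn.
have deig : forall j, 0 < d j -> gminp <= d j /\ d j <= gmax.
  move=> j dj; case: (hnz j) => hn.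
  - have [e _ _] := eig j _ (hU j) hn; split; [exact: hmin | exact: hmax].
  - have [e _ _] := eig j _ (hV j) hn; split; [exact: hmin | exact: hmax].
have dmax : forall j, d j <= gmax.
  move=> j; case: (hnz j) => hn.
  - by have [e _ _] := eig j _ (hU j) hn; exact: hmax.
  - by have [e _ _] := eig j _ (hV j) hn; exact: hmax.
have d0A : forall j, d j = 0 -> A *m col j U = 0 /\ A *m col j V = 0.
  move=> j dj0; split.
  - case: (eqVneq (col j U) 0) => [->|hn]; first by rewrite mulmx0.
    by have [_ _] := eig j _ (hU j) hn; apply.
  - case: (eqVneq (col j V) 0) => [->|hn]; first by rewrite mulmx0.
    by have [_ _] := eig j _ (hV j) hn; apply.
split.
- move=> l; pose e : 'rV[R]_m := delta_mx 0 l.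
  have eA : forall i, (e *m A^T) 0 i = A i l.
    move=> i; rewrite mxE (bigD1 l) //= big1 => [|k kl].
      by rewrite !mxE !eqxx mul1r addr0.
    by rewrite !mxE (negbTE kl) andbF mul0r.
  have h1 : \sum_i A i l ^+ 2 = (e *m B *m e^T) 0 0.
    by rewrite quadA rdot_sum; apply: eq_bigr => i _; rewrite expr2 eA.
  rewrite h1 hquad.
  have h2 : (e *m e^T) 0 0 = 1.
    rewrite rdot_sum (bigD1 l) //= big1 => [|k kl].
      by rewrite !mxE !eqxx mulr1 addr0.
    by rewrite !mxE (negbTE kl) andbF mulr0.
  rewrite -[gmax]mulr1 -h2 hpar mulr_sumr; apply: ler_sum => j _.
  apply: ler_wpM2r; last exact: dmax.
  by rewrite addr_ge0 // -expr2 sqr_ge0.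
- move=> p dl c c0.
  set x := (A^T *m p)^T; set y := dl^T.
  have e1 : \sum_l (A^T *m p) l 0 * dl l 0 = (x *m y^T) 0 0.
    by rewrite rdot_sum; apply: eq_bigr => l _; rewrite !mxE.
  have e2 : \sum_l (A^T *m p) l 0 ^+ 2 = (x *m x^T) 0 0.
    by rewrite rdot_sum; apply: eq_bigr => l _; rewrite !mxE expr2.
  have e3 : \sum_i (A *m dl) i 0 ^+ 2 = (y *m B *m y^T) 0 0.
    rewrite quadA rdot_sum; apply: eq_bigr => i _.
    by rewrite /y -trmx_mul expr2 !mxE.
  rewrite e1 e2 e3 hquad hpar hpar.
  rewrite -sumrN mulr_suml mulr_sumr -big_split /=; apply: ler_sum => j _.
  set a := (x *m U) 0 j; set a' := (x *m V) 0 j.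
  set b := (y *m U) 0 j; set b' := (y *m V) 0 j.
  have k0 : 0 < c * gminp by rewrite mulr_gt0.
  have sq : forall u w : R, 0 <= u ^+ 2 / (2 * c * gminp) + c * gminp / 2 * w ^+ 2 + u * w.
    move=> u w.
    have -> : u ^+ 2 / (2 * c * gminp) + c * gminp / 2 * w ^+ 2 + u * w =
              (u + c * gminp * w) ^+ 2 / (2 * (c * gminp)).
      by field; rewrite !gt_eqF.
    by rewrite divr_ge0 ?sqr_ge0 // mulr_ge0 // ltW.
  have [dj0|djp] := eqVneq (d j) 0.
  - have [hAU hAV] := d0A j dj0.
    have AU0 : forall k, (A *m U) k j = 0.
      move=> k; have := congr1 (fun X : 'M[R]_(n,1) => X k 0) hAU; rewrite !mxE => E.
      by apply: etrans E; apply: eq_bigr => l _; rewrite !mxE.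
    have AV0 : forall k, (A *m V) k j = 0.
      move=> k; have := congr1 (fun X : 'M[R]_(n,1) => X k 0) hAV; rewrite !mxE => E.
      by apply: etrans E; apply: eq_bigr => l _; rewrite !mxE.
    have za : a = 0.
      by rewrite /a /x trmx_mul trmxK -mulmxA mxE big1 // => k _; rewrite AU0 mulr0.
    have za' : a' = 0.
      by rewrite /a' /x trmx_mul trmxK -mulmxA mxE big1 // => k _; rewrite AV0 mulr0.
    rewrite za za' dj0; lra.
  - have dj : 0 < d j by rewrite lt_def djp dge0.
    have [hg _] := deig j dj.
    have s1 := sq a b; have s2 := sq a' b'.
    have s3 : c / 2 * (gminp * (b * b + b' * b')) <= c / 2 * (d j * (b * b + b' * b')).
      apply: ler_wpM2l; first by rewrite divr_ge0 ?ltW.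
      by apply: ler_wpM2r; rewrite // addr_ge0 // -expr2 sqr_ge0.
    rewrite mulrDl; move: s1 s2 s3; rewrite !expr2; lra.
Qed.
End Bounds.

Section OneD.
Variable R : realType.

Lemma lip_cont (g : R -> R) (K : R) : 0 < K ->
  (forall x y, `|g x - g y| <= K * `|x - y|) -> continuous g.
Proof.
move=> K0 Hg x; apply/cvgrPdist_lt => e e0; near=> z.
rewrite (le_lt_trans (Hg _ _)) // -ltr_pdivlMl //.
near: z; apply: (@cvgr_dist_lt _ _ _ _ _ id); [exact: cvg_id | by rewrite mulr_gt0 ?invr_gt0].
Unshelve. all: by end_near. Qed.

Lemma mvt_gen (g : R -> R) : (forall x, derivable g x 1) ->
  forall a b, exists2 s, 0 <= s <= 1 & g b - g a = derive1 g (a + s * (b - a)) * (b - a).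
Proof.
move=> dg a b.
have cg : continuous g.
  move=> x; apply: differentiable_continuous; exact/derivable1_diffP/dg.
have isd : forall x : R, is_derive x (1:R) g (derive1 g x).
  by move=> x; rewrite derive1E; apply: derivableP.
case: (ltgtP a b) => hab.
- have [c /andP[] hc1 hc2 E] := MVT hab (fun x _ => isd x) (continuous_subspaceT cg).
  exists ((c - a) / (b - a)).
    apply/andP; split; first by rewrite divr_ge0 // subr_ge0 ltW.
    by rewrite ler_pdivrMr ?subr_gt0 // mul1r lerD2r ltW.
  by rewrite divfK ?subr_eq0 ?gt_eqF // addrCA subrr addr0.
- have [c /andP[] hc1 hc2 E] := MVT hab (fun x _ => isd x) (continuous_subspaceT cg).
  exists ((a - c) / (a - b)).
    apply/andP; split; first by rewrite divr_ge0 // subr_ge0 ltW.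
    by rewrite ler_pdivrMr ?subr_gt0 // mul1r lerD2l lerN2 ltW.
  have -> : a + (a - c) / (a - b) * (b - a) = c.
    rewrite -(opprB a b) mulrN divfK ?subr_eq0 ?gt_eqF //; lra.
  by rewrite -(opprB (g a)) E -mulrN opprB.
- by exists 0; rewrite ?lexx ?ler01 // hab !subrr mulr0.
Qed.

Lemma force0 (K c : R) : (forall t, 0 < t <= 1 -> K <= t * c) -> K <= 0.
Proof.
move=> H; rewrite leNgt; apply/negP => K0.
case: (lerP c 0) => c0.
  have Kc : K <= 1 * c by apply: H; rewrite ltr01 lexx.
  lra.
pose t := Num.min 1 (K / (2 * c)).
have t0 : 0 < t by rewrite lt_min ltr01 divr_gt0 // mulr_gt0.
have t1 : t <= 1 by rewrite ge_min lexx.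
have := H t; rewrite t0 t1 => /(_ isT).
have : t * c <= K / 2.
  have : t <= K / (2 * c) by rewrite ge_min lexx orbT.
  rewrite -(ler_pM2r c0) => /le_trans; apply.
  rewrite (_ : K / (2 * c) * c = K / 2) //; field; by rewrite gt_eqF.
lra.
Qed.


Lemma quad_id_deriv (f : R -> R) (a k x0 y : R) (df : R) : is_derive y (1:R) f df ->
  is_derive y (1:R) (fun z => f z - a * z - k * ((z - x0) ^+ 2)) (df - a - k * (2 * (y - x0))).
Proof.
move=> H.
have e : (fun z => f z - a * z - k * ((z - x0) ^+ 2)) = f - (a *: id) - k *: ((id - cst x0) ^+ 2).
  by apply/funext => z /=.
rewrite e; apply: is_derive_eq.
rewrite subr0 /= expr1. by rewrite /GRing.scale /= !mulr1.
Qed.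

Lemma arith1 (y a b N mu r : R) : y - a <= N -> mu * r = N + mu -> 0 < mu -> mu * r <= b - a -> y <= b.
Proof. lra. Qed.
Lemma arith2 (y a b N mu r : R) : a - y <= N -> mu * r = N + mu -> 0 < mu -> mu * r <= a - b -> b <= y.
Proof. lra. Qed.

Section Conj.
Variables (f : R -> R) (M mu : R).
Hypotheses (hM : 0 < M) (hmu : 0 < mu) (fs : smooth M f) (fc : strongly_convex mu f).
Local Notation f' := (derive1 f).

Lemma sc_grad x0 x : f x0 + f' x0 * (x - x0) + mu / 2 * (x - x0)^+2 <= f x.
Proof.
have [df lip] := fs.
set d := x - x0.
suff : f x0 + f' x0 * d + mu / 2 * d^+2 - f x <= 0 by lra.
apply: (@force0 _ ((M + mu/2) * d^+2)) => t /andP[t0 t1].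
have := fc x x0 t; rewrite (ltW t0) t1 => /(_ isT) hc.
have eb : t * x + (1 - t) * x0 = x0 + t * d by rewrite /d; ring.
rewrite eb in hc.
have [s /andP[s0 s1] E] := mvt_gen f df x0 (x0 + t * d).
have cx : x0 + s * (x0 + t * d - x0) - x0 = s * (t * d) by ring.
have hD := lip (x0 + s * (x0 + t * d - x0)) x0.
rewrite cx in hD.
move: E; set c := x0 + s * (x0 + t * d - x0) => E.
have h1 : - ((f' c - f' x0) * (t * d)) <= M * (t * d)^+2.
  have hD' : `|f' c - f' x0| <= M * `|t * d|.
    apply: (le_trans hD); rewrite ler_pM2l // normrM ger0_norm //.
    by rewrite -[leRHS]mul1r ler_wpM2r.
  have e1 : - ((f' c - f' x0) * (t * d)) <= `|f' c - f' x0| * `|t * d|.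
    by rewrite -normrM; apply: le_trans (ler_norm _) _; rewrite normrN.
  apply: (le_trans e1); rewrite -(real_normK (num_real (t * d))) expr2 mulrA.
  by rewrite ler_wpM2r.
have h2 : t * (f' x0 * d + mu / 2 * d^+2 - f x + f x0) <= t * (t * ((M + mu / 2) * d^+2)).
  have e2 : x0 + t * d - x0 = t * d by ring.
  rewrite e2 in E; rewrite /d in hc h1 E *.
  nra.
move: h2; rewrite ler_pM2l //; lra.
Qed.

Lemma descent x0 x : f x <= f x0 + f' x0 * (x - x0) + M / 2 * (x - x0)^+2.
Proof.
have [df lip] := fs.
pose psi := fun z => f z - f' x0 * z - (M/2) * ((z - x0)^+2).
have dpsi : forall y, is_derive y (1:R) psi (f' y - f' x0 - M/2 * (2 * (y - x0))).
  by move=> y; apply: quad_id_deriv; rewrite derive1E; exact: derivableP.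
have dpsi' : forall y, derivable psi y 1 by move=> y; exact: ex_derive.
have d1 : forall y, derive1 psi y = f' y - f' x0 - M/2 * (2 * (y - x0)).
  by move=> y; rewrite derive1E; apply: derive_val.
have [s /andP[s0 s1] E] := mvt_gen psi dpsi' x0 x.
rewrite d1 in E.
move: E; set c := x0 + s * (x - x0) => E.
have cx : c - x0 = s * (x - x0) by rewrite /c; ring.
have hD := lip c x0; rewrite cx in hD.
set d := x - x0 in E cx hD *.
have e1 : (f' c - f' x0) * d <= M * s * d^+2.
  have e2 : (f' c - f' x0) * d <= `|f' c - f' x0| * `|d|.
    by rewrite -normrM; apply: ler_norm.
  apply: (le_trans e2); rewrite -(real_normK (num_real d)) expr2 mulrA.
  by rewrite ler_wpM2r //; move: hD; rewrite normrM (ger0_norm s0) mulrA.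
have : psi x - psi x0 <= 0.
  rewrite E cx; nra.
rewrite /psi subrr expr0n /= mulr0 subr0; rewrite /d; lra.
Qed.

Lemma mono (x y : R) : mu * (x - y)^+2 <= (f' x - f' y) * (x - y).
Proof. have h1 := sc_grad x y; have h2 := sc_grad y x; nra. Qed.

Lemma exists_inv (y : R) : exists x : R, f' x = y.
Proof.
have [df lip] := fs.
have cf' : continuous f' := lip_cont f' M hM lip.
set r := `|y - f' 0| / mu + 1.
have r0 : 0 < r by rewrite /r ltr_pwDr // divr_ge0 // ltW.
have mur : mu * r = `|y - f' 0| + mu.
  by rewrite /r mulrDr mulr1 mulrC divfK // gt_eqF.
have hy1 : y - f' 0 <= `|y - f' 0| := ler_norm _.
have hy2 : f' 0 - y <= `|y - f' 0| by rewrite -normrN opprB ler_norm.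
clearbody r.
have hb : y <= f' r.
  have := mono r 0; rewrite subr0 => h.
  have : mu * r <= f' r - f' 0.
    by move: h; rewrite expr2 mulrA ler_pM2r.
  exact: arith1 hy1 mur hmu.
have ha : f' (- r) <= y.
  have := mono (- r) 0; rewrite subr0 => h.
  have : mu * r <= f' 0 - f' (- r).
    by move: h; rewrite sqrrN expr2 mulrA -opprB mulrNN ler_pM2r.
  exact: arith2 hy2 mur hmu.
have hrr : - r <= r by rewrite -subr_ge0 opprK ltW // addr_gt0.
have [c _ hc] := @IVT R f' (- r) r y hrr (continuous_subspaceT cf') ltac:(by rewrite ge_min ha le_max hb orbT).
by exists c.
Qed.

Lemma conj_ub (x y : R) : f' x = y -> forall u, y * u - f u <= y * x - f x.
Proof.
move=> <- u; have := sc_grad x u.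
have p : 0 <= mu / 2 * (u - x)^+2 by rewrite mulr_ge0 ?sqr_ge0 // divr_ge0 // ltW.
lra.
Qed.

Lemma conj_val (x y : R) : f' x = y -> fconj f y = y * x - f x.
Proof.
move=> hx; rewrite /fconj.
have ub : ubound (range (fun u => y * u - f u)) (y * x - f x).
  by move=> z [u _ <-]; exact: conj_ub.
apply/le_anti/andP; split.
  by apply: ge_sup => //; exists (y * x - f x), x.
apply: ub_le_sup; first by exists (y * x - f x).
by exists x.
Qed.

Lemma conj_ge (y u : R) : y * u - f u <= fconj f y.
Proof. have [x hx] := exists_inv y; rewrite (conj_val _ _ hx); exact: conj_ub. Qed.

Lemma conj_upper (x y s : R) : f' x = y ->
  fconj f (y + s) <= fconj f y + s * x + s^+2 / (2 * mu).
Proof.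
move=> hx; have [x' hx'] := exists_inv (y + s).
rewrite (conj_val _ _ hx) (conj_val _ _ hx').
have h := sc_grad x x'; rewrite hx in h.
have key : s * (x' - x) - mu / 2 * (x' - x)^+2 <= s^+2 / (2 * mu).
  rewrite ler_pdivlMr ?mulr_gt0 //.
  have -> : (s * (x' - x) - mu / 2 * (x' - x) ^+ 2) * (2 * mu) = s^+2 - (s - mu * (x' - x))^+2.
    by field.
  by rewrite lerBlDr lerDl sqr_ge0.
lra.
Qed.

Lemma conj_lower (x y s : R) : f' x = y ->
  fconj f y + s * x + s^+2 / (2 * M) <= fconj f (y + s).
Proof.
move=> hx; rewrite (conj_val _ _ hx).
apply: le_trans (conj_ge (y + s) (x + s / M)).
have h := descent x (x + s / M); rewrite hx in h.
set w := s / M in h *.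
have sw : s = M * w by rewrite /w mulrC divfK // gt_eqF.
have e : s^+2 / (2 * M) = M / 2 * w^+2 by rewrite sw; field; rewrite gt_eqF.
rewrite e; rewrite sw in h *.
have e2 : x + w - x = w by ring.
rewrite e2 in h; nra.
Qed.

End Conj.
End OneD.

Section D.
Variable R : realType.
Lemma deriv_sq (phi : R -> R) (l C : R) :
  (forall t, `|phi t - phi 0 - l * t| <= C * t^+2) -> derive1 phi 0 = l.
Proof.
move=> H; rewrite /derive1.
apply: cvg_lim => //.
pose C' := `|C| + 1.
have C'0 : 0 < C' by rewrite /C' ltr_pwDr.
apply/cvgrPdist_le => e e0.
near=> h.
have hn : h != 0 by near: h; exact: nbhs_dnbhs_neq.
have hs : `|h| <= e / C' by near: h; apply: dnbhs0_le; rewrite divr_gt0.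
rewrite addr0 /GRing.scale /=.
have -> : l - h^-1 * (phi h - phi 0) = - (h^-1 * (phi h - phi 0 - l * h)).
  by field.
rewrite normrN normrM normrV ?unitfE //.
have := H h; have hh : 0 < `|h| by rewrite normr_gt0.
rewrite -(real_normK (num_real h)) => Hh.
rewrite ler_pdivrMl //.
apply: (le_trans Hh).
have : C <= C' by rewrite /C'; apply: le_trans (ler_norm C) _; rewrite lerDl.
move: hs; rewrite ler_pdivlMr // => hs hC.
rewrite expr2 mulrA; have: C * `|h| <= e.
  apply: le_trans (_ : C' * `|h| <= e); last by rewrite mulrC.
  by rewrite ler_wpM2r.
move=> hCe; rewrite [`|h| * e]mulrC ler_wpM2r //.
Unshelve. all: by end_near. Qed.
End D.

Section Main.
Variable R : realType.
Variables (n E : nat) (A : 'M[R]_(n, E)) (f : 'I_n -> R -> R) (M mu : 'I_n -> R).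
Hypotheses (hM : forall i, 0 < M i) (hmu : forall i, 0 < mu i)
  (fs : forall i, smooth (M i) (f i)) (fc : forall i, strongly_convex (mu i) (f i)).
Variable xs : 'I_n -> R -> R.
Hypothesis hxs : forall i y, derive1 (f i) (xs i y) = y.

Definition pv (lam : 'cV[R]_E) (i : 'I_n) : R := xs i ((A *m lam) i 0).

Lemma F_upper lam v : Fdual A f (lam + v) <= Fdual A f lam +
  \sum_i (A *m v) i 0 * pv lam i + \sum_i ((A *m v) i 0) ^+ 2 / (2 * mu i).
Proof.
rewrite /Fdual -!big_split /=; apply: ler_sum => i _.
rewrite mulmxDr mxE.
exact: (@conj_upper R (f i) (M i) (mu i) (hM i) (hmu i) (fs i) (fc i) _ _ _ (hxs i _)).
Qed.

Lemma F_lower lam v : Fdual A f lam +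
  \sum_i (A *m v) i 0 * pv lam i + \sum_i ((A *m v) i 0) ^+ 2 / (2 * M i)
  <= Fdual A f (lam + v).
Proof.
rewrite /Fdual -!big_split /=; apply: ler_sum => i _.
rewrite mulmxDr; have -> : (A *m lam + A *m v) i 0 = (A *m lam) i 0 + (A *m v) i 0 by rewrite mxE.
exact: (@conj_lower R (f i) (M i) (mu i) (hM i) (hmu i) (fs i) (fc i) _ _ _ (hxs i _)).
Qed.

Definition gr (lam : 'cV[R]_E) (l : 'I_E) : R := \sum_i A i l * pv lam i.

Lemma Ae_scale (t : R) l i : (A *m (t *: (delta_mx l ord0 : 'cV[R]_E))) i 0 = t * A i l.
Proof.
rewrite -scalemxAr mxE mxE (bigD1 l) //= big1 => [|k kl].
  by rewrite mxE !eqxx mulr1 addr0 mulrC.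
by rewrite mxE (negbTE kl) mulr0.
Qed.

Lemma partial_eq lam l : partial (Fdual A f) lam l = gr lam l.
Proof.
rewrite /partial.
apply: (@deriv_sq R _ _ (\sum_i A i l ^+ 2 / (2 * mu i))) => t.
rewrite scale0r addr0.
have hu := F_upper lam (t *: (delta_mx l ord0 : 'cV[R]_E)).
have hl := F_lower lam (t *: (delta_mx l ord0 : 'cV[R]_E)).
have e1 : \sum_i (A *m (t *: (delta_mx l ord0 : 'cV[R]_E))) i 0 * pv lam i = gr lam l * t.
  by rewrite /gr mulr_suml; apply: eq_bigr => i _; rewrite Ae_scale; ring.
have e2 : \sum_i ((A *m (t *: (delta_mx l ord0 : 'cV[R]_E))) i 0) ^+ 2 / (2 * mu i) =
          (\sum_i A i l ^+ 2 / (2 * mu i)) * t ^+ 2.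
  by rewrite mulr_suml; apply: eq_bigr => i _; rewrite Ae_scale; ring.
have e3 : 0 <= \sum_i ((A *m (t *: (delta_mx l ord0 : 'cV[R]_E))) i 0) ^+ 2 / (2 * M i).
  apply: sumr_ge0 => i _; rewrite divr_ge0 ?sqr_ge0 // mulr_ge0 // ltW //.
rewrite e1 e2 in hu; rewrite e1 in hl.
rewrite ger0_norm; lra.
Qed.


Lemma step_bound lam l (mm L : R) : 0 < mm -> (forall i, mm <= mu i) ->
  \sum_i A i l ^+ 2 <= L * mm -> 0 < L ->
  Fdual A f (lam - (L^-1 * partial (Fdual A f) lam l) *: (delta_mx l ord0 : 'cV[R]_E))
    <= Fdual A f lam - gr lam l ^+ 2 / (2 * L).
Proof.
move=> mm0 hmm hsum L0.
rewrite partial_eq; set g := gr lam l; set q := L^-1 * g.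
have gq : g = L * q by rewrite /q mulrA mulfV ?gt_eqF // mul1r.
rewrite -scaleNr.
have hu := F_upper lam ((- q) *: (delta_mx l ord0 : 'cV[R]_E)).
have e1 : \sum_i (A *m ((- q) *: (delta_mx l ord0 : 'cV[R]_E))) i 0 * pv lam i = - q * g.
  by rewrite /g /gr mulr_sumr; apply: eq_bigr => i _; rewrite Ae_scale; ring.
have e2 : \sum_i ((A *m ((- q) *: (delta_mx l ord0 : 'cV[R]_E))) i 0) ^+ 2 / (2 * mu i) =
          q ^+ 2 * \sum_i A i l ^+ 2 / (2 * mu i).
  by rewrite mulr_sumr; apply: eq_bigr => i _; rewrite Ae_scale; ring.
have hS : \sum_i A i l ^+ 2 / (2 * mu i) <= L / 2.
  apply: (@le_trans _ _ (\sum_i A i l ^+ 2 / (2 * mm))).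
    apply: ler_sum => i _; apply: ler_wpM2l; first exact: sqr_ge0.
    rewrite lef_pV2 ?posrE ?mulr_gt0 //; exact: ler_wpM2l.
  rewrite -mulr_suml ler_pdivrMr ?mulr_gt0 //.
  have -> : L / 2 * (2 * mm) = L * mm by field.
  exact: hsum.
have hq : q ^+ 2 * \sum_i A i l ^+ 2 / (2 * mu i) <= q ^+ 2 * (L / 2).
  by apply: ler_wpM2l; first exact: sqr_ge0.
rewrite e1 e2 in hu.
have -> : g ^+ 2 / (2 * L) = L / 2 * q ^+ 2 by rewrite gq; field; rewrite gt_eqF.
rewrite gq in hu; move: hu hq; nra.
Qed.


Lemma exch (dl : 'cV[R]_E) (p : 'cV[R]_n) :
  \sum_i (A *m dl) i 0 * p i 0 = \sum_l (A^T *m p) l 0 * dl l 0.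
Proof.
rewrite (eq_bigr (fun i => \sum_l A i l * dl l 0 * p i 0)); last first.
  by move=> i _; rewrite mxE mulr_suml.
rewrite exchange_big /=; apply: eq_bigr => l _.
by rewrite mxE mulr_suml; apply: eq_bigr => i _; rewrite mxE; ring.
Qed.

Lemma PL lam lamstar (Mx gminp : R) : 0 < Mx -> (forall i, M i <= Mx) -> 0 < gminp ->
  (forall (p : 'cV[R]_n) (dl : 'cV[R]_E) (c : R), 0 < c ->
    - (\sum_l (A^T *m p) l 0 * dl l 0) <=
      (\sum_l (A^T *m p) l 0 ^+ 2) / (2 * c * gminp) + c / 2 * \sum_i ((A *m dl) i 0) ^+ 2) ->
  Fdual A f lam - Fdual A f lamstar <= Mx / (2 * gminp) * \sum_l gr lam l ^+ 2.
Proof.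
move=> Mx0 hMx g0 N2.
pose pc : 'cV[R]_n := \col_i pv lam i.
have gA : forall l, gr lam l = (A^T *m pc) l 0.
  by move=> l; rewrite /gr mxE; apply: eq_bigr => i _; rewrite !mxE.
set dl := lamstar - lam.
have hl := F_lower lam dl.
have e0 : lam + dl = lamstar by rewrite /dl addrC subrK.
rewrite e0 in hl.
have ex : \sum_i (A *m dl) i 0 * pv lam i = \sum_l (A^T *m pc) l 0 * dl l 0.
  by rewrite -exch; apply: eq_bigr => i _; rewrite [pc i 0]mxE.
have hM2 : Mx^-1 / 2 * \sum_i ((A *m dl) i 0) ^+ 2 <= \sum_i ((A *m dl) i 0) ^+ 2 / (2 * M i).
  rewrite mulr_sumr; apply: ler_sum => i _.
  rewrite [X in X <= _]mulrC; apply: ler_wpM2l; first exact: sqr_ge0.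
  rewrite -invfM lef_pV2 ?posrE ?mulr_gt0 //; have := hMx i; lra.
have hN := N2 pc dl (Mx^-1) ltac:(by rewrite invr_gt0).
have -> : Mx / (2 * gminp) * \sum_l gr lam l ^+ 2 = (\sum_l (A^T *m pc) l 0 ^+ 2) / (2 * Mx^-1 * gminp).
  rewrite (eq_bigr _ (fun l _ => congr1 (fun z => z ^+ 2) (gA l))).
  by field; rewrite !gt_eqF.
rewrite ex in hl.
lra.
Qed.


Lemma count2 (w : 'I_E -> R) : incidence A ->
  \sum_i \sum_(l in Sedges A i) w l = 2 * \sum_l w l.
Proof.
move=> inc.
rewrite (eq_bigr (fun i => \sum_l (if A i l != 0 then w l else 0))); last first.
  by move=> i _; rewrite big_mkcond; apply: eq_bigr => l _; rewrite inE.
rewrite exchange_big mulr_sumr; apply: eq_bigr => l _ /=.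
have [i [j [ij hi hj ho]]] := inc l.
rewrite (bigD1 i) //= (bigD1 j) /=; last by rewrite eq_sym.
rewrite big1 => [|k /andP[kj ki]]; last by rewrite ho // eqxx.
rewrite hi hj oner_neq0 oppr_eq0 oner_neq0 /=; ring.
Qed.

Lemma expect_bound lam (L : R) : 0 < L -> incidence A -> (forall i, 0 < Ndeg A i)%N -> (0 < n)%N ->
  (forall l, Fdual A f (lam - (L^-1 * partial (Fdual A f) lam l) *: (delta_mx l ord0 : 'cV[R]_E))
    <= Fdual A f lam - gr lam l ^+ 2 / (2 * L)) ->
  SUCD_expect A f L lam <= Fdual A f lam - (\sum_l gr lam l ^+ 2) / (L * n%:R * (Nmax A)%:R).
Proof.
move=> L0 inc hN n0 hstep.
rewrite /SUCD_expect.
set F0 := Fdual A f lam.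
pose w l := gr lam l ^+ 2 / (2 * L).
have w0 : forall l, 0 <= w l by move=> l; rewrite /w divr_ge0 ?sqr_ge0 // mulr_ge0 // ltW.
have Nm0 : (0 < Nmax A)%N.
  apply: (@leq_trans (Ndeg A (Ordinal n0))); first exact: hN.
  exact: (@leq_bigmax _ (fun i => Ndeg A i)).
have s1 : forall i, (Ndeg A i)%:R^-1 * \sum_(l in Sedges A i)
      Fdual A f (lam - (L^-1 * partial (Fdual A f) lam l) *: (delta_mx l ord0 : 'cV[R]_E))
    <= F0 - (Nmax A)%:R^-1 * \sum_(l in Sedges A i) w l.
  move=> i.
  have Ni0 : (0 : R) < (Ndeg A i)%:R by rewrite ltr0n.
  apply: (@le_trans _ _ ((Ndeg A i)%:R^-1 * \sum_(l in Sedges A i) (F0 - w l))).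
    apply: ler_wpM2l; first by rewrite invr_ge0 ltW.
    by apply: ler_sum => l _; exact: hstep.
  rewrite sumrB sumr_const -/(Ndeg A i) -[F0 *+ _]mulr_natl mulrBr mulrA mulVf ?gt_eqF // mul1r.
  rewrite lerD2l lerN2; apply: ler_wpM2r; first exact: sumr_ge0.
  rewrite lef_pV2 ?posrE ?ltr0n // ler_nat.
  exact: (@leq_bigmax _ (fun i => Ndeg A i)).
apply: (@le_trans _ _ (n%:R^-1 * \sum_i (F0 - (Nmax A)%:R^-1 * \sum_(l in Sedges A i) w l))).
  apply: ler_wpM2l; first by rewrite invr_ge0 ler0n.
  by apply: ler_sum => i _; exact: s1.
rewrite sumrB sumr_const card_ord -[F0 *+ _]mulr_natl -mulr_sumr count2 //.
rewrite /w -mulr_suml.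
have n0' : (0 : R) < n%:R by rewrite ltr0n.
have N0' : (0 : R) < (Nmax A)%:R by rewrite ltr0n.
set S := \sum_l gr lam l ^+ 2.
rewrite [X in X <= _](_ : _ = F0 - S / (L * n%:R * (Nmax A)%:R)) //.
by field; rewrite !gt_eqF.
Qed.


Lemma maxf_ge (g : 'I_n -> R) i : g i <= maxf g.
Proof. by rewrite /maxf (bigD1 i) //= le_max lexx. Qed.

Lemma minf_le (g : 'I_n -> R) i : minf g <= g i.
Proof. by rewrite /minf (bigD1 i) //= ge_min lexx. Qed.

Lemma minf_gt0 (g : 'I_n -> R) : (0 < n)%N -> (forall i, 0 < g i) -> 0 < minf g.
Proof.
move=> n0 hg; rewrite /minf; apply: (big_ind (fun x => 0 < x)).
- exact: lt_le_trans (hg (Ordinal n0)) (maxf_ge g (Ordinal n0)).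
- by move=> x y hx hy; rewrite lt_min hx hy.
- by move=> i _; exact: hg.
Qed.

Lemma main_result (gmax gminp : R) (lamstar : 'cV[R]_E) :
  incidence A -> (forall i : 'I_n, (0 < Ndeg A i)%N) -> (0 < n)%N ->
  eigenvalue (A^T *m A) gmax ->
  (forall a, eigenvalue (A^T *m A) a -> a <= gmax) ->
  eigenvalue (A^T *m A) gminp -> 0 < gminp ->
  (forall a, eigenvalue (A^T *m A) a -> 0 < a -> gminp <= a) ->
  (forall lam, Fdual A f lamstar <= Fdual A f lam) ->
  let L := gmax / minf mu in
  let sigmaA := gminp / maxf M in
  forall lam : 'cV[R]_E,
    SUCD_expect A f L lam - Fdual A f lamstar
    <= (1 - 2 * sigmaA / (L * n%:R * (Nmax A)%:R)) * (Fdual A f lam - Fdual A f lamstar).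
Proof.
move=> inc hN n0 egmax hmax egmin g0 hmin hstar L sigmaA lam.
have [N1 N2] := @spec_bounds R n E A gmax gminp hmax g0 hmin.
set mm := minf mu; set Mx := maxf M.
have mm0 : 0 < mm := minf_gt0 mu n0 hmu.
have hmm : forall i, mm <= mu i := minf_le mu.
have Mx0 : 0 < Mx := lt_le_trans (hM (Ordinal n0)) (maxf_ge M (Ordinal n0)).
have hMx : forall i, M i <= Mx := maxf_ge M.
have gm0 : 0 < gmax := lt_le_trans g0 (hmax _ egmin).
have L0 : 0 < L by rewrite /L divr_gt0.
have Lmm : L * mm = gmax by rewrite /L divfK ?gt_eqF.
have hstep : forall l, Fdual A f (lam - (L^-1 * partial (Fdual A f) lam l) *: (delta_mx l ord0 : 'cV[R]_E))
    <= Fdual A f lam - gr lam l ^+ 2 / (2 * L).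
  by move=> l; apply: (@step_bound lam l mm L mm0 hmm _ L0); rewrite Lmm; exact: N1.
have hE := @expect_bound lam L L0 inc hN n0 hstep.
have hPL := @PL lam lamstar Mx gminp Mx0 hMx g0 N2.
have D0 : 0 <= Fdual A f lam - Fdual A f lamstar by rewrite subr_ge0.
set D := Fdual A f lam - Fdual A f lamstar in hPL D0 *.
set S := \sum_l gr lam l ^+ 2 in hE hPL.
set K := L * n%:R * (Nmax A)%:R in hE *.
have Nm0 : (0 < Nmax A)%N.
  apply: (@leq_trans (Ndeg A (Ordinal n0))); first exact: hN.
  exact: (@leq_bigmax _ (fun i => Ndeg A i)).
have K0 : 0 < K.
  by rewrite /K; apply: mulr_gt0; [apply: mulr_gt0; rewrite // ltr0n | rewrite ltr0n].
have key : 2 * sigmaA / K * D <= S / K.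
  rewrite mulrAC ler_pM2r ?invr_gt0 // /sigmaA.
  have -> : 2 * (gminp / Mx) * D = (2 * gminp / Mx) * D by rewrite mulrA.
  rewrite -ler_pdivlMl ?divr_gt0 ?mulr_gt0 //.
  by rewrite invf_div.
rewrite mulrBl mul1r.
have -> : SUCD_expect A f L lam - Fdual A f lamstar =
          SUCD_expect A f L lam - Fdual A f lam + D by rewrite /D; ring.
lra.
Qed.

End Main.

Theorem theorem1 (R : realType) (n E : nat) (A : 'M[R]_(n, E))
  (f : 'I_n -> R -> R) (M mu : 'I_n -> R)
  (gmax gminp : R) (lamstar : 'cV[R]_E) :
  incidence A ->
  (forall i : 'I_n, (0 < Ndeg A i)%N) ->
  (forall i, 0 < M i) -> (forall i, 0 < mu i) ->
  (forall i, smooth (M i) (f i)) ->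
  (forall i, strongly_convex (mu i) (f i)) ->
  (* gmax = largest eigenvalue of A^T A *)
  eigenvalue (A^T *m A) gmax ->
  (forall a, eigenvalue (A^T *m A) a -> a <= gmax) ->
  (* gminp = smallest strictly positive eigenvalue of A^T A *)
  eigenvalue (A^T *m A) gminp -> 0 < gminp ->
  (forall a, eigenvalue (A^T *m A) a -> 0 < a -> gminp <= a) ->
  (* lamstar minimizes F *)
  (forall lam, Fdual A f lamstar <= Fdual A f lam) ->
  let L := gmax / minf mu in
  let sigmaA := gminp / maxf M in
  forall lam : 'cV[R]_E,
    SUCD_expect A f L lam - Fdual A f lamstar
    <= (1 - 2 * sigmaA / (L * n%:R * (Nmax A)%:R)) * (Fdual A f lam - Fdual A f lamstar).
Proof.
move=> inc hN hM hmu fs fc egmax hmax egmin g0 hmin hstar.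
have n0 : (0 < n)%N.
  move/eigenvalueP: egmax => [v _ vn0].
  case: (pickP (fun l : 'I_E => true)) => [l _|H]; last first.
    by exfalso; move/negP: vn0; apply; apply/eqP/rowP => l; have := H l.
  have [i [j _]] := inc l.
  exact: (leq_ltn_trans (leq0n i) (ltn_ord i)).
have [xs hxs] : exists xs : 'I_n -> R -> R, forall i y, derive1 (f i) (xs i y) = y.
  exists (fun i y => xget 0 [set x | derive1 (f i) x = y]) => i y.
  exact: (xgetPex 0 (@exists_inv R (f i) (M i) (mu i) (hM i) (hmu i) (fs i) (fc i) y)).
exact: (@main_result R n E A f M mu hM hmu fs fc xs hxs gmax gminp lamstar inc hN n0 egmax hmax egmin g0 hmin hstar).
Qed.
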